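(* Let $s,d,k\ge1$ and let $I=(G,D,\mathsf{cost},\mathsf{supply},\mathsf{demand})$ be an $(s,d)$-decent instance of Min Weight Generalized Domination with minimum solution cost $\mathsf{OPT}$. Let $V_0,\dots,V_{k-1}\subseteq V(G)$ be such that the sets $N_G[V_0],\dots,N_G[V_{k-1}]$ are pairwise disjoint, and for each $j$ let $I_j=\mathsf{Clear}(I;V_j)$. Then (1) for every $j\in\{0,\dots,k-1\}$, $I_j$ is $(s,d)$-decent and has a solution of cost at most $\mathsf{OPT}$; and (2) there exists $j\in\{0,\dots,k-1\}$ such that every solution to $I_j$ has cost at least $(1-\frac1k)\mathsf{OPT}$.
   Context: An instance of Min Weight Generalized Domination consists of a loopless multigraph $G$ and for every vertex $u$: a finite domain $D_u$, $\mathsf{cost}_u\colon D_u\to\mathbb{R}_{\ge0}\cup\{+\infty\}$, and $\mathsf{supply}_u,\mathsf{demand}_u\colon D_u\to 2^{\delta(u)}$ ($\delta(u)$ = edges incident to $u$), with some $s_u\in D_u$ having $\mathsf{supply}_u(s_u)=\delta(u)$ and finite cost. A solution is $\phi$ with $\phi(u)\in D_u$ such that for every edge $e$ with endpoints $u,v$, $e\in\mathsf{demand}_u(\phi(u))\Rightarrow e\in\mathsf{supply}_v(\phi(v))$ and $e\in\mathsf{demand}_v(\phi(v))\Rightarrow e\in\mathsf{supply}_u(\phi(u))$; cost $\sum_u\mathsf{cost}_u(\phi(u))$. A vertex is $(s,d)$-meager if $|\delta(u)|\le s$ and $|D_u|\le d$; state-monotonous if for all ordered $x_1,x_2\in D_u$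 there is $x\in D_u$ with $\mathsf{cost}_u(x)\le\mathsf{cost}_u(x_1)+\mathsf{cost}_u(x_2)$, $\mathsf{supply}_u(x)=\mathsf{supply}_u(x_1)\cup\mathsf{supply}_u(x_2)$, $\mathsf{demand}_u(x)\subseteq\mathsf{demand}_u(x_1)$. The instance is $(s,d)$-decent if all vertices are $(s,d)$-meager and state-monotonous. For $A\subseteq V(G)$, $N_G[A]$ is the closed neighborhood of $A$. $\mathsf{Clear}(I;A)$ is obtained from $I$ by deleting all edges with both endpoints in $A$ (also from all supply and demand sets) and then setting $\mathsf{demand}_u(x)=\emptyset$ for every $u\in A$ and every $x\in D_u$. *)

(* Defs.v *)
From mathcomp Require Import all_boot all_order all_algebra.
From mathcomp Require Import reals constructive_ereal.
Set Implicit Arguments. Unset Strict Implicit. Unset Printing Implicit Defensive.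
Import Order.TTheory GRing.Theory Num.Theory.
Local Open Scope ring_scope.
Local Open Scope ereal_scope.

(* Vertices range over the finite type V (V(G) = all of V).
   The multigraph has edge identifiers in a finite type E; the actual edge set
   is [edges], and [ends e] gives the two endpoints of e (unordered in
   meaning; the order of the pair is irrelevant in all definitions). *)
Record instance (R : realType) (V E : finType) := Instance {
  edges : {set E};
  ends : E -> V * V;
  dom : V -> finType;
  cost : forall u, dom u -> \bar R;
  supply : forall u, dom u -> {set E};
  demand : forall u, dom u -> {set E}
}.

Section Defs.
Variables (R : realType) (V E : finType).
Implicit Types (I : instance R V E) (A : {set V}).

Definition incident (e : E) (u : V) I := ((ends I e).1 == u) || ((ends I e).2 == u).

Definition delta I (u : V) : {set E} := [set e in edges I | incident e u I].

Definition wf_instance I : Prop :=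
  [/\ (forall e, e \in edges I -> (ends I e).1 != (ends I e).2),
      (forall u (x : dom I u), 0 <= cost x),
      (forall u (x : dom I u), supply x \subset delta I u /\ demand x \subset delta I u)
    & (forall u, exists s : dom I u, supply s = delta I u /\ cost s < +oo)].

Definition is_solution I (phi : forall u, dom I u) : Prop :=
  forall e, e \in edges I ->
    let u := (ends I e).1 in let v := (ends I e).2 in
    (e \in demand (phi u) -> e \in supply (phi v)) /\
    (e \in demand (phi v) -> e \in supply (phi u)).

Arguments is_solution I phi : clear implicits.

Definition sol_cost I (phi : forall u, dom I u) : \bar R :=
  \sum_(u : V) cost (phi u).

Arguments sol_cost I phi : clear implicits.

Definition is_opt I (OPT : \bar R) : Prop :=
  (exists phi, is_solution I phi /\ sol_cost I phi = OPT) /\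
  (forall phi, is_solution I phi -> OPT <= sol_cost I phi).

Definition meager (s d : nat) I (u : V) : Prop :=
  (#|delta I u| <= s)%N /\ (#|dom I u| <= d)%N.

Definition state_monotonous I (u : V) : Prop :=
  forall x1 x2 : dom I u, exists x : dom I u,
    [/\ cost x <= cost x1 + cost x2,
        supply x = supply x1 :|: supply x2
      & demand x \subset demand x1].

Definition decent (s d : nat) I : Prop :=
  wf_instance I /\ forall u, meager s d I u /\ state_monotonous I u.

Definition closed_nbhd I A : {set V} :=
  A :|: [set v | [exists e in edges I,
           ((ends I e).1 \in A) && ((ends I e).2 == v) ||
           ((ends I e).2 \in A) && ((ends I e).1 == v)]].

Definition clear_edges I A : {set E} :=
  [set e in edges I | ~~ (((ends I e).1 \in A) && ((ends I e).2 \in A))].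

Definition Clear I A : instance R V E :=
  @Instance R V E (clear_edges I A) (ends I) (@dom _ _ _ I) (@cost _ _ _ I)
    (fun u x => supply x :&: clear_edges I A)
    (fun u x => if u \in A then set0 else demand x :&: clear_edges I A).

End Defs.
Arguments is_solution {R V E} I phi.
Arguments sol_cost {R V E} I phi.

(* Main.v *)
Require Import Defs.
From mathcomp Require Import all_boot all_order all_algebra.
From mathcomp Require Import reals constructive_ereal.
Import Order.TTheory GRing.Theory Num.Theory.
Local Open Scope ring_scope.
Local Open Scope ereal_scope.

Section H2.
Variables (R : realType) (V E : finType).
Implicit Types (I : instance R V E) (A : {set V}).

Lemma nbhd1 {I A e} : e \in edges I -> (ends I e).1 \in A -> (ends I e).2 \in closed_nbhd I A.
Proof.
move=> he ha; rewrite /closed_nbhd in_setU; apply/orP; right; rewrite inE.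
by apply/existsP; exists e; rewrite he ha eqxx.
Qed.

Lemma nbhd2 {I A e} : e \in edges I -> (ends I e).2 \in A -> (ends I e).1 \in closed_nbhd I A.
Proof.
move=> he ha; rewrite /closed_nbhd in_setU; apply/orP; right; rewrite inE.
by apply/existsP; exists e; rewrite he ha eqxx orbT.
Qed.

Lemma sub_nbhd I A : A \subset closed_nbhd I A.
Proof. exact: subsetUl. Qed.

Variables (I : instance R V E) (A : {set V}) (m : forall u, dom I u -> dom I u -> dom I u).
Hypothesis Hm : forall u x1 x2, [/\ cost (m u x1 x2) <= cost x1 + cost x2,
   supply (m u x1 x2) = supply x1 :|: supply x2 & demand (m u x1 x2) \subset demand x1].
Variables (phi : forall u, dom I u) (psi : forall u, dom (Clear I A) u).

Definition chi : forall u, dom I u := fun u =>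
  if u \in A then m u (phi u) (psi u)
  else if u \in closed_nbhd I A then m u (psi u) (phi u) else psi u.

Lemma F1 u : supply (i:=I) (psi u) \subset supply (chi u).
Proof.
rewrite /chi; case: ifP => _; first by have [_ -> _] := Hm u (phi u) (psi u); apply: subsetUr.
case: ifP => _ //; by have [_ -> _] := Hm u (psi u) (phi u); apply: subsetUl.
Qed.

Lemma F2 u : u \in closed_nbhd I A -> supply (phi u) \subset supply (chi u).
Proof.
rewrite /chi => hN; case: ifP => _; first by have [_ -> _] := Hm u (phi u) (psi u); apply: subsetUl.
rewrite hN; by have [_ -> _] := Hm u (psi u) (phi u); apply: subsetUr.
Qed.

Lemma F3 u : u \in A -> demand (chi u) \subset demand (phi u).
Proof. by rewrite /chi => ->; have [_ _ ->] := Hm u (phi u) (psi u). Qed.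

Lemma F4 u : u \notin A -> demand (chi u) \subset demand (i:=I) (psi u).
Proof.
rewrite /chi => /negbTE ->; case: ifP => _ //; by have [_ _ ->] := Hm u (psi u) (phi u).
Qed.

Lemma chi_sol : is_solution I phi -> is_solution (Clear I A) psi -> is_solution I chi.
Proof.
move=> Hp Hq e he /=.
have [p1 p2] := Hp e he.
have cl : ((ends I e).1 \notin A) || ((ends I e).2 \notin A) -> e \in clear_edges I A.
  by rewrite inE he -negb_and.
split.
- case: (boolP ((ends I e).1 \in A)) => hu.
    move=> /(subsetP (F3 _ hu)) /p1 /(subsetP (F2 _ (nbhd1 (A:=A) he hu))); done.
  move=> /(subsetP (F4 _ hu)) hd.
  have hc : e \in clear_edges I A by apply: cl; rewrite hu.
  have [q1 _] := Hq e hc.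
  move: q1; rewrite /= (negbTE hu) in_setI hd hc => /(_ isT).
  by rewrite in_setI hc andbT => /(subsetP (F1 _)).
- case: (boolP ((ends I e).2 \in A)) => hu.
    move=> /(subsetP (F3 _ hu)) /p2 /(subsetP (F2 _ (nbhd2 (A:=A) he hu))); done.
  move=> /(subsetP (F4 _ hu)) hd.
  have hc : e \in clear_edges I A by apply: cl; rewrite hu orbT.
  have [_ q2] := Hq e hc.
  move: q2; rewrite /= (negbTE hu) in_setI hd hc => /(_ isT).
  by rewrite in_setI hc andbT => /(subsetP (F1 _)).
Qed.

Lemma chi_cost : sol_cost I chi <=
  sol_cost (Clear I A) psi + \sum_(u in closed_nbhd I A) cost (phi u).
Proof.
rewrite /sol_cost [X in _ <= _ + X]big_mkcond /= -big_split /=; apply: lee_sum => u _.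
rewrite /chi; case: ifP => hA.
  rewrite (subsetP (sub_nbhd I A) _ hA); have [h _ _] := Hm u (phi u) (psi u).
  by rewrite addeC.
case: ifP => hN; first by have [h _ _] := Hm u (psi u) (phi u).
by rewrite adde0.
Qed.
End H2.
Section H.
Variables (R : realType) (V E : finType).
Implicit Types (I : instance R V E) (A : {set V}).

Lemma clear_sub I A : clear_edges I A \subset edges I.
Proof. by apply/subsetP=> e; rewrite inE => /andP[]. Qed.

Lemma delta_clear I A u : delta (Clear I A) u = delta I u :&: clear_edges I A.
Proof.
apply/setP=> e; rewrite !inE /incident /=.
by case: (e \in edges I); case: ((ends I e).1 \in A); case: ((ends I e).2 \in A); case: ((ends I e).1 == u); case: ((ends I e).2 == u).
Qed.

Lemma clear_decent s d I A : decent s d I -> decent s d (Clear I A).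
Proof.
move=> [[Hl Hc Hsd Hs] Hu]; split; first split.
- by move=> e /(subsetP (clear_sub I A)); apply: Hl.
- exact: Hc.
- move=> u x; rewrite delta_clear /=; have [h1 h2] := Hsd u x; split.
    by apply: setSI.
  by case: ifP => _; [apply: sub0set | apply: setSI].
- move=> u; have [x [h1 h2]] := Hs u; exists x; split => //.
  by rewrite delta_clear /= h1.
move=> u; have [[m1 m2] Hm] := Hu u; split.
  split => //; apply: leq_trans m1; rewrite delta_clear; apply: subset_leq_card.
  exact: subsetIl.
move=> x1 x2; have [x [c1 c2 c3]] := Hm x1 x2; exists x; split => //=.
  by rewrite c2 setIUl.
by case: ifP => _; [apply: sub0set | apply: setSI].
Qed.

Lemma sol_clear I A phi : is_solution I phi -> is_solution (Clear I A) phi.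
Proof.
move=> H e /= he; have he' := subsetP (clear_sub I A) _ he.
have [h1 h2] := H e he'; rewrite /=; split.
  case: ifP => _; first by rewrite inE.
  by rewrite !in_setI he !andbT; apply: h1.
case: ifP => _; first by rewrite inE.
by rewrite !in_setI he !andbT; apply: h2.
Qed.
End H.

Theorem lemma4p3 (R : realType) (V E : finType) (s d k : nat)
    (I : instance R V E) (OPT : \bar R) (Vs : 'I_k -> {set V}) :
  (1 <= s)%N -> (1 <= d)%N -> (1 <= k)%N ->
  decent s d I ->
  is_opt I OPT ->
  (forall i j : 'I_k, i != j ->
     [disjoint closed_nbhd I (Vs i) & closed_nbhd I (Vs j)]) ->
  (forall j : 'I_k,
     decent s d (Clear I (Vs j)) /\
     exists phi, is_solution (Clear I (Vs j)) phi /\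
                 sol_cost (Clear I (Vs j)) phi <= OPT) /\
  (exists j : 'I_k, forall phi, is_solution (Clear I (Vs j)) phi ->
     ((1 - (k%:R)^-1)%:E * OPT <= sol_cost (Clear I (Vs j)) phi)).
Proof.
move=> hs hd hk Hdec [[phi0 [Hphi0 Hcost0]] Hopt] Hdisj.
split.
  move=> j; split; first exact: clear_decent.
  exists phi0; split; first exact: sol_clear.
  by rewrite -Hcost0.
have [[Hl Hc Hsd Hs] Hu] := Hdec.
have msig : forall u (x1 x2 : dom I u), {x : dom I u | [&& cost x <= cost x1 + cost x2,
   supply x == supply x1 :|: supply x2 & demand x \subset demand x1]}.
  move=> u x1 x2; apply: sigW; have [x [a b c]] := (Hu u).2 x1 x2.
  by exists x; rewrite a b eqxx c.
pose m := fun u x1 x2 => proj1_sig (msig u x1 x2).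
have Hm : forall u x1 x2, [/\ cost (m u x1 x2) <= cost x1 + cost x2,
   supply (m u x1 x2) = supply x1 :|: supply x2 & demand (m u x1 x2) \subset demand x1].
  by move=> u x1 x2; rewrite /m; move: (proj2_sig (msig u x1 x2)) => /and3P[a /eqP b c].
have ssig : forall u, {x : dom I u | (supply x == delta I u) && (cost x < +oo)}.
  move=> u; apply: sigW; have [x [a b]] := Hs u; by exists x; rewrite a eqxx b.
pose sf := fun u => proj1_sig (ssig u).
have Hsf : is_solution I sf.
  move=> e he /=; rewrite /sf.
  move: (proj2_sig (ssig (ends I e).1)) => /andP[/eqP a1 _].
  move: (proj2_sig (ssig (ends I e).2)) => /andP[/eqP a2 _].
  by rewrite a1 a2 !inE he /incident !eqxx orbT.
have OPTfin : OPT < +oo.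
  apply: (le_lt_trans (Hopt _ Hsf)); apply: lte_sum_pinfty => u _.
  by rewrite /sf; move: (proj2_sig (ssig u)) => /andP[_ ->].
have cge0 : forall u, 0 <= cost (phi0 u) by move=> u; apply: Hc.
have cle : forall u, cost (phi0 u) <= OPT.
  move=> u; rewrite -Hcost0 /sol_cost (bigD1 u) //=; apply: leeDl.
  by apply: sume_ge0 => v _.
pose r u := fine (cost (phi0 u)).
have hr : forall u, cost (phi0 u) = (r u)%:E.
  move=> u; rewrite /r fineK // ge0_fin_numE //; exact: le_lt_trans (cle u) OPTfin.
have rge0 : forall u, (0 <= r u)%R by move=> u; apply: fine_ge0.
pose T := (\sum_u r u)%R.
have HT : OPT = T%:E.
  by rewrite -Hcost0 /sol_cost (eq_bigr _ (fun u _ => hr u)) sumEFin.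
pose cr j := (\sum_(u in closed_nbhd I (Vs j)) r u)%R.
have sumcr : (\sum_j cr j <= T)%R.
  rewrite /cr -(partition_disjoint_bigcup _ _ Hdisj) /T [X in (_ <= X)%R](bigID (fun u => u \in \bigcup_j closed_nbhd I (Vs j))) /=.
  by rewrite lerDl sumr_ge0.
pose j0 : 'I_k := Ordinal hk.
have [j _ Hmin] := @arg_minP _ _ _ j0 predT cr isT.
exists j => psi Hpsi.
have kcr : (cr j * k%:R <= T)%R.
  apply: le_trans sumcr.
  have -> : (cr j * k%:R = \sum_(i < k) cr j)%R by rewrite sumr_const card_ord mulr_natr.
  by apply: ler_sum => i _; apply: Hmin.
have H1 := Hopt _ (@chi_sol _ _ _ I (Vs j) m Hm phi0 psi Hphi0 Hpsi).
have H2 := @chi_cost _ _ _ I (Vs j) m Hm phi0 psi.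
rewrite (eq_bigr _ (fun u _ => hr u)) sumEFin -/(cr j) in H2.
have H3 := le_trans H1 H2.
rewrite HT in H3 *.
move: H3; case: (sol_cost (Clear I (Vs j)) psi) => [x| |] //=.
  rewrite -EFinD !lee_fin => hx.
  have kpos : (0 < k%:R :> R)%R by rewrite ltr0n.
  have : (cr j <= T / k%:R)%R by rewrite ler_pdivlMr.
  move=> h; apply: le_trans _ (_ : (T - cr j <= x)%R); last by rewrite lerBlDr.
  rewrite mulrBl mul1r lerD2l lerN2 mulrC; exact: h.
by move=> _; apply: leey.
Qed.
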